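(* Let $n\geq 1$, let $\mathcal{X}=\{-1,1\}^n$, and let $\mathcal{P}\subseteq[0,1]$ be a Lebesgue measurable set with Lebesgue measure $\mu(\mathcal{P})>0$. Let $\mathcal{K}$ be the set of admissible controllers, i.e. maps $K:\mathcal{X}\to\mathbb{R}^n$, $X=(X_0,\dots,X_{n-1})\mapsto (K_0(X),\dots,K_{n-1}(X))$, such that for each $k\in\{0,\dots,n-1\}$ the value $K_k(X)$ depends only on $X_0,\dots,X_{k-1}$ (causality; in particular $K_0$ is constant), and $|K_k(X)|\leq 1$ for all $X$ and $k$. For $K\in\mathcal{K}$ and $p\in[0,1]$ let \[ ELG_K(p)\doteq\frac{1}{n}\sum_{X\in\mathcal{X}}P_p(X)\sum_{k=0}^{n-1}\log\bigl(1+K_k(X)X_k\bigr),\qquad P_p(X)\doteq p^{n_h(X)}(1-p)^{n-n_h(X)}, \] where $n_h(X)=\#\{i: X_i=1\}$, with the conventions $\log 0=-\infty$ and $0\cdot(-\infty)=0$. Then the function \[ f(K)\doteq\int_{p\in\mathcal{P}}ELG_K(p)\,dp,\qquad K\in\mathcal{K}, \] has a unique maximizer $K^*\in\mathcal{K}$, given, for each stage $k\in\{0,\dots,n-1\}$ and each sample path $\bar X\in\mathcal{X}$, by \[ K_k^*(\bar X)=\frac{\int_{p\in\mathcal{P}}p^{q_k}(1-p)^{k-q_k}(2p-1)\,dp}{\int_{p\in\mathcal{P}}p^{q_k}(1-p)^{k-q_k}\,dp}, \] where $q_k=q_k(\bar X)=\#\{i\in\{0,\dots,k-1\}:\bar X_i=1\}$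 (so $q_0=0$).
   Context: Interpretation: a bettor flips a coin $n$ times with probability of heads $p$ and even-money payoff; $X_k=1$ means heads and $X_k=-1$ tails at flip $k$. Starting from wealth $V_0>0$, the bet at stage $k$ is $u_k=K_k(X)V_k$ (positive means a bet on heads, negative on tails), and wealth evolves as $V_{k+1}=(1+K_k(X)X_k)V_k$; thus $ELG_K(p)=\frac1n\mathbb{E}\log(V_n/V_0)$. The set $\mathcal{P}$ represents the uncertainty in the probability of heads. *)

(* Defs.v *)
From HB Require Import structures.
From mathcomp Require Import all_boot all_order all_algebra.
From mathcomp Require Import all_classical all_reals all_analysis.
Set Implicit Arguments. Unset Strict Implicit. Unset Printing Implicit Defensive.
Import Order.TTheory GRing.Theory Num.Theory.
Local Open Scope classical_set_scope.
Local Open Scope ring_scope.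

Section Betting.
Variables (R : realType) (n : nat).

(* Sample paths X in {-1,1}^n, encoded as boolean functions: true = heads = +1. *)
Definition spath := {ffun 'I_n -> bool}.

Definition sgnb (b : bool) : R := if b then 1 else -1.

Definition nheads (X : spath) : nat := #|[pred i : 'I_n | X i]|.

Definition Pp (p : R) (X : spath) : R := p ^+ nheads X * (1 - p) ^+ (n - nheads X).

(* Extended logarithm with log 0 = -oo (arguments <= 0 never occur for
   admissible controllers except 0). *)
Definition elog (x : R) : \bar R := if x <= 0 then -oo%E else (ln x)%:E.

Definition controller := spath -> 'I_n -> R.

Definition admissible (K : controller) : Prop :=
  (forall (k : 'I_n) (X Y : spath),
      (forall i : 'I_n, (i < k)%N -> X i = Y i) -> K X k = K Y k) /\
  (forall (X : spath) (k : 'I_n), `|K X k| <= 1).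

(* ELG_K(p); mathcomp's extended-real product satisfies 0 * -oo = 0. *)
Definition ELG (K : controller) (p : R) : \bar R :=
  ((n%:R)^-1)%:E *
  (\sum_(X : spath) ((Pp p X)%:E * \sum_(k < n) elog (1 + K X k * sgnb (X k))))%E.

Definition fobj (P : set R) (K : controller) : \bar R :=
  (\int[@lebesgue_measure R]_(p in P) ELG K p)%E.

Definition qk (X : spath) (k : 'I_n) : nat := #|[pred i : 'I_n | (i < k)%N && X i]|.

Definition Kstar (P : set R) : controller := fun X k =>
  (\int[@lebesgue_measure R]_(p in P)
      (p ^+ qk X k * (1 - p) ^+ (k - qk X k) * (2 * p - 1))) /
  (\int[@lebesgue_measure R]_(p in P)
      (p ^+ qk X k * (1 - p) ^+ (k - qk X k))).

End Betting.

(* Main.v *)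
Require Import Defs.
From HB Require Import structures.
From mathcomp Require Import all_boot all_order all_algebra.
From mathcomp Require Import all_classical all_reals all_analysis.
From mathcomp Require Import ring lra.
Set Implicit Arguments. Unset Strict Implicit. Unset Printing Implicit Defensive.
Import Order.TTheory GRing.Theory Num.Theory.
Import numFieldNormedType.Exports.
Local Open Scope classical_set_scope.
Local Open Scope ring_scope.
Section Comb.
Variables (R : realType) (n : nat).
Implicit Types (X : spath n) (p : R).

Definition flip (j : 'I_n) (X : spath n) : spath n :=
  [ffun i => if i == j then ~~ X i else X i].

Lemma flipK j : involutive (flip j).
Proof.
move=> X; apply/ffunP => i; rewrite !ffunE.
by case: (i == j); rewrite ?negbK.
Qed.

Lemma flip_ne j X i : i != j -> flip j X i = X i.
Proof. by rewrite ffunE => /negbTE ->. Qed.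

Lemma flip_j j X : flip j X j = ~~ X j.
Proof. by rewrite ffunE eqxx. Qed.

Lemma sum_flip j (F : spath n -> R) : \sum_X F (flip j X) = \sum_X F X.
Proof. by rewrite [RHS](reindex_inj (can_inj (flipK j))). Qed.

Definition cw p (b : bool) : R := if b then p else 1 - p.
Definition wt (S : pred 'I_n) p X : R := \prod_(i | S i) cw p (X i).

Lemma Pp_wt p X : Pp p X = wt predT p X.
Proof.
rewrite /wt (bigID (fun i => X i)) /=.
rewrite (eq_bigr (fun=> p)); last by move=> i ->.
rewrite [X in _ * X](eq_bigr (fun=> 1 - p)); last by move=> i /negbTE ->.
rewrite !prodr_const /Pp /nheads; congr (_ * _ ^+ _).
have h := cardC [pred i : 'I_n | X i]; rewrite card_ord in h.
by rewrite -{1}h addKn.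
Qed.

End Comb.
Section Comb2.
Variables (R : realType) (n : nat).
Implicit Types (X : spath n) (p : R).

Lemma cw_flip p b : cw p b + cw p (~~ b) = 1.
Proof. by case: b => /=; rewrite /cw /=; ring. Qed.

Lemma pair_sum j (F : spath n -> R) :
  \sum_X F X = 2^-1 * \sum_X (F X + F (flip j X)).
Proof. by rewrite big_split /= sum_flip; field. Qed.

Lemma wt_flip (S : pred 'I_n) j p X : ~~ S j -> wt S p (flip j X) = wt S p X.
Proof.
move=> Sj; apply: eq_bigr => i Si; rewrite flip_ne //.
by apply/eqP => ij; rewrite -ij Si in Sj.
Qed.

Lemma wt_U1 (S : pred 'I_n) j p X :
  ~~ S j -> wt (predU1 j S) p X = cw p (X j) * wt S p X.
Proof.
move=> Sj; rewrite /wt (bigD1 j) /= ?eqxx //; congr (_ * _).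
apply: eq_bigl => i /=.
by case: (eqVneq i j) => [->|] /=; rewrite ?(negbTE Sj) ?andbT.
Qed.

Lemma marg_step (S : pred 'I_n) j p (g : spath n -> R) :
  ~~ S j -> (forall X, g (flip j X) = g X) ->
  \sum_X wt (predU1 j S) p X * g X = 2^-1 * \sum_X wt S p X * g X.
Proof.
move=> Sj gj; rewrite (pair_sum j); congr (_ * _); apply: eq_bigr => X _.
by rewrite !wt_U1 // wt_flip // gj flip_j -mulrDl -mulrDl cw_flip mul1r.
Qed.

Lemma marg t m p (g : spath n -> R) : (m + t = n)%N ->
  (forall j : 'I_n, (m <= j)%N -> forall X, g (flip j X) = g X) ->
  \sum_X Pp p X * g X =
  (2^-1)^+t * \sum_X wt (fun i : 'I_n => (i < m)%N) p X * g X.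
Proof.
elim: t m => [|t IH] m.
  rewrite addn0 => mn _; rewrite expr0 mul1r; apply: eq_bigr => X _.
  rewrite Pp_wt; congr (_ * _); apply: eq_bigl => i; by have := ltn_ord i; rewrite mn => ->.
move=> mt gi; have mn : (m < n)%N by rewrite -mt addnS ltnS leq_addr.
rewrite (IH m.+1); last first.
- by move=> j mj; apply: gi; apply: ltnW.
- by rewrite addSnnS.
set j := Ordinal mn.
rewrite (eq_bigr (fun X => wt (predU1 j (fun i : 'I_n => (i < m)%N)) p X * g X)); last first.
  by move=> X _; congr (_ * _); apply: eq_bigl => i; rewrite /= ltnS leq_eqVlt.
rewrite marg_step ?ltnn //; last by apply: gi => /=.
by rewrite exprSr -mulrA.
Qed.

Definition causal (K : controller R n) := forall (k : 'I_n) (X Y : spath n),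
  (forall i : 'I_n, (i < k)%N -> X i = Y i) -> K X k = K Y k.

Lemma stage p (K : controller R n) (k : 'I_n) (psi : R -> bool -> R) :
  causal K ->
  \sum_X Pp p X * psi (K X k) (X k) =
  (2^-1)^+(n - k) * \sum_X wt (fun i : 'I_n => (i < k)%N) p X *
      (p * psi (K X k) true + (1 - p) * psi (K X k) false).
Proof.
move=> cK.
have kn := ltn_ord k.
rewrite (@marg (n - k.+1) k.+1); last first.
- move=> j kj X; rewrite flip_ne; last first.
    by apply/eqP => e; rewrite e ltnn in kj.
  congr psi; apply: cK => i ik; rewrite flip_ne //.
  by apply/eqP => e; move: (ltn_trans ik kj); rewrite e ltnn.
- by rewrite subnKC.
rewrite (eq_bigr (fun X => wt (predU1 k (fun i : 'I_n => (i < k)%N)) p X * psi (K X k) (X k))); last first.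
  by move=> X _; congr (_ * _); apply: eq_bigl => i; rewrite /= ltnS leq_eqVlt.
rewrite (pair_sum k) -(subnSK kn) exprSr -mulrA; congr (_ * (_ * _)).
apply: eq_bigr => X _.
have KX : K (flip k X) k = K X k.
  apply: cK => i ik; rewrite flip_ne //.
  by apply/eqP => e; rewrite e ltnn in ik.
rewrite !wt_U1 ?ltnn // wt_flip ?ltnn // KX flip_j.
by case: (X k) => /=; rewrite /cw /=; ring.
Qed.

End Comb2.
Section Comb3.
Variables (R : realType) (n : nat).
Implicit Types (X : spath n) (p : R).

Lemma card_lt (k : 'I_n) : #|[pred i : 'I_n | (i < k)%N]| = k.
Proof.
rewrite -sum1_card.
transitivity (\sum_(i < n | (i < k)%N) 1)%N; first by apply: eq_bigl.
by rewrite -(big_ord_widen n (fun=> 1%N) (ltnW (ltn_ord k))) sum1_card card_ord.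
Qed.

Lemma wt_qk p X (k : 'I_n) :
  wt (fun i : 'I_n => (i < k)%N) p X = p ^+ qk X k * (1 - p) ^+ (k - qk X k).
Proof.
rewrite /wt (bigID (fun i => X i)) /=.
rewrite (eq_bigr (fun=> p)); last by move=> i /andP[_ ->].
rewrite [X in _ * X](eq_bigr (fun=> 1 - p)); last by move=> i /andP[_ /negbTE ->].
rewrite !prodr_const /qk; congr (_ * _ ^+ _).
have h := cardID [pred i : 'I_n | X i] [pred i : 'I_n | (i < k)%N].
rewrite card_lt in h.
have e1 : #|[predI [pred i : 'I_n | (i < k)%N] & [pred i : 'I_n | X i]]| =
   #|[pred i : 'I_n | (i < k)%N && X i]| by apply: eq_card.
rewrite -[X in (X - _)%N]h e1 addKn; apply: eq_card => i.
by rewrite !inE andbC.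
Qed.

End Comb3.
Section Anal.
Variables (R : realType) (P : set R).
Hypotheses (P01 : P `<=` `[0%R, 1%R]) (mP : measurable P)
  (muP : (0 < @lebesgue_measure R P)%E).
Local Notation mu := (@lebesgue_measure R).

Lemma N01_meas : measurable ([set (0:R)] `|` [set 1]).
Proof. by apply: measurableU; apply: measurable_set1. Qed.

Lemma N01_0 : mu ([set (0:R)] `|` [set 1]) = 0%E.
Proof.
apply/eqP; rewrite eq_le measure_ge0 andbT.
have := @measureU2 _ _ _ (@lebesgue_measure R) [set 0] [set 1] (measurable_set1 _) (measurable_set1 _).
rewrite (_ : _ [set (0:R)] = 0%E); last exact: lebesgue_measure_set1.
rewrite (_ : _ [set (1:R)] = 0%E); last exact: lebesgue_measure_set1.
by rewrite adde0.
Qed.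

Lemma ae01 (Q : R -> Prop) : (forall x, P x -> 0 < x < 1 -> Q x) ->
  {ae mu, forall x, P x -> Q x}.
Proof.
move=> hQ; exists ([set (0:R)] `|` [set 1]); split; [exact: N01_meas|exact: N01_0|].
move=> x /= hx; apply: contrapT => hN; apply: hx => Px; apply: hQ => //.
have := P01 Px; rewrite /= in_itv /= => /andP[x0 x1].
rewrite !lt_neqAle x0 x1 !andbT; apply/andP; split; apply/eqP => e; apply: hN.
- by left.
- by right.
Qed.

Lemma contP (f : R -> R) : continuous f -> mu.-integrable P (EFin \o f).
Proof.
move=> cf; apply: (@integrableS _ _ _ mu `[0%R, 1%R] P) => //.
apply: continuous_compact_integrable; first exact: segment_compact.
exact: continuous_subspaceT.
Qed.

Lemma Rint_fin (f : R -> R) : continuous f ->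
  (\int[mu]_(x in P) (f x)%:E)%E = (\int[mu]_(x in P) f x)%:E.
Proof. by move=> cf; rewrite /Rintegral fineK //; apply: integrable_fin_num => //; exact: (contP cf). Qed.

Lemma Rint_gt0 (f : R -> R) : continuous f -> (forall x, P x -> 0 <= f x) ->
  (forall x, P x -> 0 < x < 1 -> 0 < f x) -> 0 < \int[mu]_(x in P) f x.
Proof.
move=> cf f0 fpos; rewrite lt_def Rintegral_ge0 // andbT; apply/eqP => h0.
have h1 : (\int[mu]_(x in P) `|(EFin \o f) x|)%E = 0%E.
  rewrite -[RHS](_ : (\int[mu]_(x in P) (f x)%:E)%E = 0%E); last by rewrite Rint_fin // h0.
  by apply: eq_integral => x /set_mem Px; rewrite /comp gee0_abs // lee_fin f0.
have mf := measurable_int _ (contP cf).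
have [N [mN N0 sN]] := (ae_eq_integral_abs mu mP mf).1 h1.
have : (mu P <= mu (N `|` ([set 0%R] `|` [set 1%R])))%E.
  apply: le_measure; rewrite ?inE //; first exact: measurableU N01_meas.
  move=> x Px; case: (pselect (x = (0:R) \/ x = (1:R))) => [[->|->]|hx]; [by right; left|by right; right|].
  left; apply: sN => /= hx2; have := hx2 Px; apply/eqP; rewrite eq_sym lt_eqF //.
  apply: fpos => //; have := P01 Px; rewrite /= in_itv /= => /andP[x0 x1].
  by rewrite !lt_neqAle x0 x1 !andbT; apply/andP; split; apply/eqP => e; apply: hx; [left|right].
move=> hle; have : (mu P <= 0)%E.
  apply: (le_trans hle); apply: (le_trans (measureU2 _ _ _)) => //; first exact: N01_meas.
  rewrite (_ : _ N = 0%E); last exact: N0.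
  rewrite (_ : _ ([set 0%R] `|` [set 1%R]) = 0%E); last exact: N01_0.
  by rewrite adde0.
by rewrite leNgt muP.
Qed.

End Anal.
Section Cont.
Variable R : realType.

Lemma cont_cst (c : R) : continuous (fun _ : R => c).
Proof. exact: cst_continuous. Qed.

Lemma cont_id : continuous (fun p : R => p).
Proof. by move=> x; exact: cvg_id. Qed.

Lemma cont_add (f g : R -> R) : continuous f -> continuous g ->
  continuous (fun p => f p + g p).
Proof. by move=> cf cg x; exact: (continuousD (cf x) (cg x)). Qed.

Lemma cont_mul (f g : R -> R) : continuous f -> continuous g ->
  continuous (fun p => f p * g p).
Proof. by move=> cf cg x; exact: (continuousM (cf x) (cg x)). Qed.

Lemma cont_sub (f g : R -> R) : continuous f -> continuous g ->
  continuous (fun p => f p - g p).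
Proof. by move=> cf cg x; exact: (continuousB (cf x) (cg x)). Qed.

Lemma cont_exp (f : R -> R) m : continuous f -> continuous (fun p => f p ^+ m).
Proof.
move=> cf; elim: m => [|m IH]; first exact: cont_cst.
have -> : (fun p => f p ^+ m.+1) = (fun p => f p * f p ^+ m).
  by apply/funext => p; rewrite exprS.
exact: cont_mul.
Qed.

Lemma cont_sum (I : Type) (s : seq I) (F : I -> R -> R) :
  (forall i, continuous (F i)) -> continuous (fun p => \sum_(i <- s) F i p).
Proof.
move=> cF; elim: s => [|a s IH].
  have -> : (fun p => \sum_(i <- [::]) F i p) = (fun _ => 0).
    by apply/funext => p; rewrite big_nil.
  exact: cont_cst.
have -> : (fun p => \sum_(i <- a :: s) F i p) =
          (fun p => F a p + \sum_(i <- s) F i p).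
  by apply/funext => p; rewrite big_cons.
exact: cont_add.
Qed.

End Cont.

Section Lin.
Variables (R : realType) (P : set R).
Hypotheses (P01 : P `<=` `[0%R, 1%R]) (mP : measurable P).
Local Notation mu := (@lebesgue_measure R).

Lemma Rint_sum (I : Type) (s : seq I) (F : I -> R -> R) :
  (forall i, continuous (F i)) ->
  \int[mu]_(p in P) (\sum_(i <- s) F i p) = \sum_(i <- s) \int[mu]_(p in P) F i p.
Proof.
move=> cF; elim: s => [|a s IH].
  under eq_Rintegral do rewrite big_nil.
  by rewrite big_nil Rintegral_cst // mul0r.
under eq_Rintegral do rewrite big_cons.
rewrite big_cons RintegralD //; first by rewrite IH.
- exact: contP.
- by apply: contP => //; apply: cont_sum.
Qed.

End Lin.
Section Key.
Variable R : realType.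

Lemma ln_le1 (y : R) : 0 < y -> ln y <= y - 1.
Proof.
move=> y0; have := @le_ln1Dx R (y - 1).
have -> : 1 + (y - 1) = y by ring.
by apply; lra.
Qed.

Lemma ln_lt1 (y : R) : 0 < y -> y != 1 -> ln y < y - 1.
Proof.
move=> y0 y1; have := @expR_gt1Dx R (ln y).
rewrite ln_eq0 // y1 lnK ?posrE // => /(_ isT) h.
lra.
Qed.

Lemma key_gen (A B u us : R) : us = (A - B) / (A + B) ->
  0 < A -> 0 < B -> -1 < u -> u < 1 ->
  A * ln (1 + u) + B * ln (1 - u) - (A * ln (1 + us) + B * ln (1 - us)) <=
  A * ((1 + u) / (1 + us) - 1 - ln ((1 + u) / (1 + us))) * (-1) +
  B * ((1 - u) / (1 - us) - 1 - ln ((1 - u) / (1 - us))) * (-1).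
Proof.
move=> -> A0 B0 u1 u2; set s := (A - B) / (A + B).
have AB : 0 < A + B by apply: addr_gt0.
have e1 : 1 + s = 2 * A / (A + B) by rewrite /s; field; rewrite lt0r_neq0.
have e2 : 1 - s = 2 * B / (A + B) by rewrite /s; field; rewrite lt0r_neq0.
have p1 : 0 < 1 + s by rewrite e1 divr_gt0 // mulr_gt0.
have p2 : 0 < 1 - s by rewrite e2 divr_gt0 // mulr_gt0.
have q1 : 0 < 1 + u by lra.
have q2 : 0 < 1 - u by lra.
rewrite !ln_div ?posrE //.
have hid : A * ((1 + u) / (1 + s) - 1) + B * ((1 - u) / (1 - s) - 1) = 0.
  rewrite e1 e2; field.
  by rewrite !lt0r_neq0.
lra.
Qed.

Lemma key_le (A B u : R) : 0 < A -> 0 < B -> -1 < u -> u < 1 ->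
  A * ln (1 + u) + B * ln (1 - u) <=
  A * ln (1 + (A - B) / (A + B)) + B * ln (1 - (A - B) / (A + B)).
Proof.
move=> A0 B0 u1 u2; rewrite -subr_le0.
apply: (le_trans (key_gen erefl A0 B0 u1 u2)).
set us := (A - B) / (A + B).
have AB : 0 < A + B by apply: addr_gt0.
have p1 : 0 < 1 + us by rewrite /us -ltrBlDl sub0r ltr_pdivlMr // mulNr; lra.
have p2 : 0 < 1 - us by rewrite /us subr_gt0 ltr_pdivrMr // mul1r; lra.
have h1 := ln_le1 (divr_gt0 (ltac:(lra) : 0 < 1 + u) p1).
have h2 := ln_le1 (divr_gt0 (ltac:(lra) : 0 < 1 - u) p2).
nra.
Qed.

Lemma key_lt (A B u : R) : 0 < A -> 0 < B -> -1 < u -> u < 1 ->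
  u != (A - B) / (A + B) ->
  A * ln (1 + u) + B * ln (1 - u) <
  A * ln (1 + (A - B) / (A + B)) + B * ln (1 - (A - B) / (A + B)).
Proof.
move=> A0 B0 u1 u2 uus; rewrite -subr_lt0.
apply: (le_lt_trans (key_gen erefl A0 B0 u1 u2)).
set us := (A - B) / (A + B) in uus *.
have AB : 0 < A + B by apply: addr_gt0.
have p1 : 0 < 1 + us by rewrite /us -ltrBlDl sub0r ltr_pdivlMr // mulNr; lra.
have p2 : 0 < 1 - us by rewrite /us subr_gt0 ltr_pdivrMr // mul1r; lra.
have r1 : (1 + u) / (1 + us) != 1.
  apply/eqP => e; move/eqP: uus; apply.
  have := e; move/(congr1 (fun x => x * (1 + us))).
  rewrite mulfVK ?lt0r_neq0 // mul1r; lra.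
have h1 := ln_lt1 (divr_gt0 (ltac:(lra) : 0 < 1 + u) p1) r1.
have h2 := ln_le1 (divr_gt0 (ltac:(lra) : 0 < 1 - u) p2).
nra.
Qed.

End Key.
Section Main.
Variables (R : realType) (n : nat) (P : set R).
Hypotheses (P01 : P `<=` `[0%R, 1%R]) (mP : measurable P)
  (muP : (0 < @lebesgue_measure R P)%E).
Local Notation mu := (@lebesgue_measure R).
Local Notation Ks := (@Kstar R n P).
Implicit Types (X : spath n) (K : controller R n).

Definition psi (u : R) (b : bool) : R := ln (1 + u * sgnb R b).
Definition gK K (p : R) : R := \sum_X Pp p X * \sum_(k < n) psi (K X k) (X k).
Definition cc (k : 'I_n) : R := (2^-1)^+(n - k).
Definition wk (k : 'I_n) (p : R) X : R := wt (fun i : 'I_n => (i < k)%N) p X.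
Definition Aw k X := \int[mu]_(p in P) (wk k p X * p).
Definition Bw k X := \int[mu]_(p in P) (wk k p X * (1 - p)).
Definition Phi K := \sum_(k < n) cc k *
  \sum_X (Aw k X * psi (K X k) true + Bw k X * psi (K X k) false).

Lemma cont_wk k X : continuous (fun p : R => wk k p X).
Proof.
have -> : (fun p => wk k p X) = (fun p => p ^+ qk X k * (1 - p) ^+ (k - qk X k)).
  by apply/funext => p; rewrite /wk wt_qk.
apply: cont_mul; apply: cont_exp; first exact: cont_id.
by apply: cont_sub; [exact: cont_cst|exact: cont_id].
Qed.

Lemma cont_Pp X : continuous (fun p : R => Pp p X).
Proof.
rewrite /Pp; apply: cont_mul; apply: cont_exp; first exact: cont_id.
by apply: cont_sub; [exact: cont_cst|exact: cont_id].
Qed.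

Lemma cont_gK K : continuous (gK K).
Proof.
rewrite /gK; apply: cont_sum => X; apply: cont_mul; first exact: cont_Pp.
exact: cont_cst.
Qed.

Lemma gK_eq K p : causal K -> gK K p = \sum_(k < n) cc k *
  \sum_X (wk k p X * p * psi (K X k) true + wk k p X * (1 - p) * psi (K X k) false).
Proof.
move=> cK; rewrite /gK.
under eq_bigr do rewrite mulr_sumr.
rewrite exchange_big; apply: eq_bigr => k _ /=.
rewrite (stage p k psi cK) /cc; congr (_ * _); apply: eq_bigr => X _; rewrite /wk; ring.
Qed.

Lemma cont_term1 k X : continuous (fun p => wk k p X * p).
Proof. by apply: cont_mul; [exact: cont_wk|exact: cont_id]. Qed.

Lemma cont_term2 k X : continuous (fun p => wk k p X * (1 - p)).
Proof.
apply: cont_mul; first exact: cont_wk.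
by apply: cont_sub; [exact: cont_cst|exact: cont_id].
Qed.

Lemma cont_inner k K : continuous (fun p =>
  \sum_X (wk k p X * p * psi (K X k) true + wk k p X * (1 - p) * psi (K X k) false)).
Proof.
apply: cont_sum => X; apply: cont_add; apply: cont_mul; try exact: cont_cst.
- exact: cont_term1.
- exact: cont_term2.
Qed.

Lemma int_gK K : causal K -> \int[mu]_(p in P) gK K p = Phi K.
Proof.
move=> cK; under eq_Rintegral do rewrite (gK_eq _ cK).
rewrite Rint_sum //; last first.
  by move=> k; apply: cont_mul; [exact: cont_cst|exact: cont_inner].
apply: eq_bigr => k _; rewrite RintegralZl //; last by apply: contP => //; exact: cont_inner.
rewrite Rint_sum //; last first.
  move=> X; apply: cont_add; apply: cont_mul; try exact: cont_cst.
  - exact: cont_term1.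
  - exact: cont_term2.
congr (_ * _); apply: eq_bigr => X _.
rewrite RintegralD //; last 2 first.
- by apply: contP => //; apply: cont_mul; [exact: cont_term1|exact: cont_cst].
- by apply: contP => //; apply: cont_mul; [exact: cont_term2|exact: cont_cst].
rewrite RintegralZr //; last by apply: contP => //; exact: cont_term1.
rewrite RintegralZr //; last by apply: contP => //; exact: cont_term2.
Qed.

Lemma Ks_eq X k : Ks X k = (Aw k X - Bw k X) / (Aw k X + Bw k X).
Proof.
rewrite /Kstar; congr (_ / _).
- rewrite /Aw /Bw -RintegralB //; last 2 first.
  + by apply: contP => //; exact: cont_term1.
  + by apply: contP => //; exact: cont_term2.
  by apply: eq_Rintegral => p _; rewrite /wk wt_qk; ring.
- rewrite /Aw /Bw -RintegralD //; last 2 first.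
  + by apply: contP => //; exact: cont_term1.
  + by apply: contP => //; exact: cont_term2.
  by apply: eq_Rintegral => p _; rewrite /wk wt_qk; ring.
Qed.

Lemma P_01 p : P p -> 0 <= p <= 1.
Proof. by move=> Pp; have := P01 Pp; rewrite /= in_itv. Qed.

Lemma Aw_gt0 k X : 0 < Aw k X.
Proof.
apply: Rint_gt0 => //; first exact: cont_term1.
- move=> p /P_01 /andP[p0 p1]; rewrite /wk wt_qk.
  by rewrite !mulr_ge0 // exprn_ge0 // subr_ge0.
- move=> p _ /andP[p0 p1]; rewrite /wk wt_qk.
  by rewrite !mulr_gt0 // exprn_gt0 // subr_gt0.
Qed.

Lemma Bw_gt0 k X : 0 < Bw k X.
Proof.
apply: Rint_gt0 => //; first exact: cont_term2.
- move=> p /P_01 /andP[p0 p1]; rewrite /wk wt_qk.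
  by rewrite !mulr_ge0 // ?exprn_ge0 // subr_ge0.
- move=> p _ /andP[p0 p1]; rewrite /wk wt_qk.
  by rewrite !mulr_gt0 // ?exprn_gt0 // subr_gt0.
Qed.

Lemma Ks_in X k : -1 < Ks X k < 1.
Proof.
rewrite Ks_eq; have A0 := Aw_gt0 k X; have B0 := Bw_gt0 k X.
have AB : 0 < Aw k X + Bw k X by apply: addr_gt0.
by rewrite ltr_pdivlMr // ltr_pdivrMr // mul1r; apply/andP; split; lra.
Qed.

Lemma Ks_causal : causal Ks.
Proof.
move=> k X Y XY.
have e : qk X k = qk Y k.
  apply: eq_card => i; rewrite !inE.
  by case: ltnP => //= ik; rewrite XY.
by rewrite /Kstar e.
Qed.

Definition allin K := forall X k, -1 < K X k < 1.

Lemma ELG_B K p : allin K -> ELG K p = ((n%:R)^-1 * gK K p)%:E.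
Proof.
move=> hK; rewrite /ELG /gK EFinM; congr (_ * _)%E.
have inner X : (\sum_(k < n) elog (1 + K X k * sgnb R (X k)))%R =
    (\sum_(k < n) psi (K X k) (X k))%:E.
  rewrite -sumEFin; apply: eq_bigr => k _.
  rewrite /elog /psi ifF //; apply/negbTE; rewrite -ltNge.
  have /andP[h1 h2] := hK X k.
  by rewrite /sgnb; case: (X k); rewrite ?mulr1 ?mulrN1; lra.
rewrite -sumEFin; apply: eq_bigr => X _.
by rewrite inner EFinM.
Qed.

Lemma fobj_B K : allin K -> causal K -> fobj P K = ((n%:R)^-1 * Phi K)%:E.
Proof.
move=> hK cK; rewrite /fobj.
under eq_integral => p _ do rewrite (ELG_B p hK).
rewrite Rint_fin //; last by apply: cont_mul; [exact: cont_cst|exact: cont_gK].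
rewrite RintegralZl //; last by apply: contP => //; exact: cont_gK.
by rewrite int_gK.
Qed.

Lemma Pp_pos (p : R) X : 0 < p < 1 -> 0 < Pp p X.
Proof. by move=> /andP[p0 p1]; rewrite /Pp mulr_gt0 // exprn_gt0 // subr_gt0. Qed.

Lemma fobj_A K : causal K -> (forall X k, `|K X k| <= 1) -> ~ allin K ->
  fobj P K = (-oo)%E.
Proof.
move=> cK bK nA.
have [X0 [k0 h0]] : exists X0 k0, 1 + K X0 k0 * sgnb R (X0 k0) = 0.
  apply: contrapT => hne; apply: nA => X k.
  have := bK X k; rewrite ler_norml => /andP[l1 l2].
  pose Y (b : bool) : spath n := [ffun i => if i == k then b else X i].
  have KY b : K (Y b) k = K X k.
    apply: cK => i ik; rewrite ffunE ifF //.
    by apply/negbTE/eqP => e; rewrite e ltnn in ik.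
  have Yk b : Y b k = b by rewrite ffunE eqxx.
  rewrite !lt_neqAle l1 l2 !andbT; apply/andP; split; apply/eqP => e.
  - apply: hne; exists (Y true), k; rewrite KY Yk -e /sgnb; ring.
  - apply: hne; exists (Y false), k; rewrite KY Yk e /sgnb; ring.
have hY : forall p, 0 < p < 1 -> ELG K p = (-oo)%E.
  move=> p p01; rewrite /ELG.
  have hs : (\sum_X ((Pp p X)%:E * \sum_(k < n) elog (1 + K X k * sgnb R (X k))))%E = (-oo)%E.
    apply/eqP; rewrite esum_eqNy; apply/existsP; exists X0; rewrite /=.
    have hi : (\sum_(k < n) elog (1 + K X0 k * sgnb R (X0 k)))%E = (-oo)%E.
      apply/eqP; rewrite esum_eqNy; apply/existsP; exists k0.
      by rewrite /= h0 /elog lexx.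
    by rewrite hi gt0_muleNy // lte_fin Pp_pos.
  rewrite hs gt0_muleNy // lte_fin invr_gt0 ltr0n.
  case: n X0 k0 {h0 hs} => [|m] X0 [] //.
rewrite /fobj (ae_eq_integral (cst (-oo)%E)) //.
- by rewrite integral_cst // gt0_mulNye.
- rewrite /ELG; apply: emeasurable_funM; first exact: measurable_cst.
  apply: emeasurable_sum => X; apply: emeasurable_funM; last exact: measurable_cst.
  by have := measurable_int _ (contP P01 mP (@cont_Pp X)).
- by apply: ae01 => // x Px hx; rewrite hY.
Qed.

Lemma term_le K k X : allin K ->
  Aw k X * psi (K X k) true + Bw k X * psi (K X k) false <=
  Aw k X * psi (Ks X k) true + Bw k X * psi (Ks X k) false.
Proof.
move=> hK; have /andP[l1 l2] := hK X k.
rewrite /psi /sgnb !mulr1 !mulrN1 Ks_eq.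
exact: key_le (Aw_gt0 k X) (Bw_gt0 k X) l1 l2.
Qed.

Lemma term_lt K k X : allin K -> K X k != Ks X k ->
  Aw k X * psi (K X k) true + Bw k X * psi (K X k) false <
  Aw k X * psi (Ks X k) true + Bw k X * psi (Ks X k) false.
Proof.
move=> hK ne; have /andP[l1 l2] := hK X k.
rewrite Ks_eq in ne.
rewrite /psi /sgnb !mulr1 !mulrN1 Ks_eq.
exact: key_lt (Aw_gt0 k X) (Bw_gt0 k X) l1 l2 ne.
Qed.

Lemma cc_gt0 k : 0 < cc k.
Proof. by rewrite /cc exprn_gt0 // invr_gt0. Qed.

Lemma Phi_le K : allin K -> Phi K <= Phi Ks.
Proof.
move=> hK; apply: ler_sum => k _; apply: ler_wpM2l; first exact: ltW (cc_gt0 k).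
by apply: ler_sum => X _; exact: term_le.
Qed.

Lemma Phi_lt K X k : allin K -> K X k != Ks X k -> Phi K < Phi Ks.
Proof.
move=> hK ne; rewrite /Phi (bigD1 k) //= [X in _ < X](bigD1 k) //=.
apply: ltr_leD.
  rewrite ltr_pM2l ?cc_gt0 //.
  rewrite (bigD1 X) //= [X in _ < X](bigD1 X) //=.
  apply: ltr_leD; first exact: term_lt.
  by apply: ler_sum => Y _; exact: term_le.
apply: ler_sum => j _; apply: ler_wpM2l; first exact: ltW (cc_gt0 j).
by apply: ler_sum => Y _; exact: term_le.
Qed.

End Main.

Theorem mainTheorem2 (R : realType) (n : nat) (P : set R) :
  (1 <= n)%N ->
  P `<=` `[0%R, 1%R] ->
  measurable P ->
  (0 < @lebesgue_measure R P)%E ->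
  [/\ @admissible R n (@Kstar R n P),
      (forall K : controller R n, @admissible R n K -> (@fobj R n P K <= @fobj R n P (@Kstar R n P))%E)
    & (forall K : controller R n, @admissible R n K ->
         (forall K' : controller R n, @admissible R n K' -> (@fobj R n P K' <= @fobj R n P K)%E) ->
         forall (X : spath n) (k : 'I_n), K X k = @Kstar R n P X k)].
Proof.
move=> n1 P01 mP muP.
have cKs := @Ks_causal R n P.
have allKs : allin (@Kstar R n P) by move=> X k; exact: Ks_in.
have aKs : admissible (@Kstar R n P).
  split; first exact: cKs.
  by move=> X k; rewrite ler_norml; have /andP[h1 h2] := allKs X k; rewrite !ltW.
have fKs := fobj_B P01 mP allKs cKs.
have ninv : 0 < (n%:R : R)^-1 by rewrite invr_gt0 ltr0n.
split => //.
- move=> K [cK bK]; case: (pselect (allin K)) => hK.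
    rewrite fKs (fobj_B P01 mP hK cK) lee_fin ler_wpM2l ?(ltW ninv) //.
    exact: Phi_le.
  by rewrite (fobj_A P01 mP muP cK bK hK) leNye.
- move=> K [cK bK] hmax X k; have h := hmax _ aKs.
  case: (pselect (allin K)) => hK; last first.
    by move: h; rewrite (fobj_A P01 mP muP cK bK hK) fKs leeNy_eq.
  apply/eqP; apply: contraT => hne.
  move: h; rewrite fKs (fobj_B P01 mP hK cK) lee_fin ler_pM2l //.
  by rewrite leNgt (Phi_lt P01 mP muP hK hne).
Qed.
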